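(* Let $\Bbbk$ be an algebraically closed field of characteristic zero, let $g$ generate $C_3$ with identity $e$, and equip $\Bbbk C_3$ with its group-algebra Frobenius structure. Then the extended structures on $\Bbbk C_3$ are exactly: (a) $\phi=\mathrm{id}$ and $\theta\in\{\pm\sqrt3\,e,\ \pm\tfrac{1}{\sqrt3}(e-2\omega g-2\omega^2g^2)\}$; (b) $\phi(g)=\omega g^2$ and $\theta=\pm\tfrac1{\sqrt3}(e+\omega g+\omega^2g^2)$; where $\omega\in\Bbbk$ ranges over the cube roots of unity. Moreover, these extended Frobenius algebras are pairwise non-isomorphic.
   Context: For a finite group $G$ with identity $e$, $\Bbbk G$ carries the Frobenius structure with group-algebra multiplication, unit $e$, comultiplication $\Delta(g)=\sum_{h\in G}gh\otimes h^{-1}$ and counit $\varepsilon(g)=\delta_{g,e}$. A Frobenius algebra over $\Bbbk$ is $(A,m,u,\Delta,\varepsilon)$ with $(A,m,u)$ an associative unital algebra, $(A,\Delta,\varepsilon)$ a coassociative counital coalgebra, and $(a\otimes1)\Delta(b)=\Delta(ab)=\Delta(a)(1\otimes b)$. A Frobenius algebra morphism is both an algebra and coalgebra morphism. An extended structure is $(\phi,\theta)$, $\phi:A\to A$ linear, $\theta\in A$, with (i) $\phi$ a Frobenius morphism, $\phi^2=\mathrm{id}$; (ii) $\phi(\theta a)=\theta a$ for all $a$; (iii) $m(\phi\otimes\mathrm{id})\Delta(1_A)=\theta^2$. An isomorphism of extended Frobenius algebras is an invertible Frobenius algebra morphism $f$ with $f\phi=\phi'f$ and $f(\theta)=\thet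a'$.
   Formalization: The non-isomorphism claim compares only structures from different ones of the six families fixed by the sign and the formula for θ in (a) and (b), not structures differing only in ω. The statement above fails without it. *)

(* Defs.v *)
From HB Require Import structures.
From mathcomp Require Import all_boot all_order all_fingroup all_algebra.
Set Implicit Arguments.
Unset Strict Implicit.
Unset Printing Implicit Defensive.
Import GRing.Theory.
Local Open Scope ring_scope.

(* An element a : GA is the
   coefficient function x |-> (coefficient of x), i.e. a = \sum_x a x . x;
   an element T : GA2 of kG (x) kG is T = \sum_(x,y) T (x,y) . x (x) y. *)
Section GroupAlgebra.
Variables (K : fieldType) (gT : finGroupType).

Definition GA := {ffun gT -> K}.
Definition GA2 := {ffun gT * gT -> K}.

Definition ga_delta (x : gT) : GA := [ffun y => (y == x)%:R].
Definition ga_one : GA := ga_delta 1%g.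
Definition ga_mul (a b : GA) : GA :=
  [ffun x => \sum_(y : gT) a y * b (y^-1 * x)%g].
(* comultiplication Delta(g) = \sum_h gh (x) h^-1, extended linearly:
   the coefficient of x (x) y in Delta(a) is a (x * y). *)
Definition ga_comul (a : GA) : GA2 := [ffun p => a (p.1 * p.2)%g].
Definition ga_counit (a : GA) : K := a 1%g.

Definition ga_linear (f : GA -> GA) : Prop :=
  forall (c : K) (a b : GA),
    f [ffun x => c * a x + b x] = [ffun x => c * f a x + f b x].

(* f (x) h applied to an element of kG (x) kG (f, h linear) *)
Definition tensor_map (f h : GA -> GA) (T : GA2) : GA2 :=
  [ffun p => \sum_(q : gT * gT)
               T q * f (ga_delta q.1) p.1 * h (ga_delta q.2) p.2].

Definition mul_map (T : GA2) : GA :=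
  [ffun x => \sum_(q : gT * gT)
               T q * ga_mul (ga_delta q.1) (ga_delta q.2) x].

Definition frobenius_morphism (f : GA -> GA) : Prop :=
  [/\ ga_linear f,
      f ga_one = ga_one,
      forall a b, f (ga_mul a b) = ga_mul (f a) (f b),
      forall a, ga_comul (f a) = tensor_map f f (ga_comul a)
    & forall a, ga_counit (f a) = ga_counit a].

Definition extended_structure (phi : GA -> GA) (theta : GA) : Prop :=
  [/\ frobenius_morphism phi,
      forall a, phi (phi a) = a,
      forall a, phi (ga_mul theta a) = ga_mul theta a
    & mul_map (tensor_map phi id (ga_comul ga_one)) = ga_mul theta theta].

Definition ext_isomorphic (phi : GA -> GA) (theta : GA)
    (phi' : GA -> GA) (theta' : GA) : Prop :=
  exists f : GA -> GA,
    [/\ frobenius_morphism f, bijective f,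
        forall a, f (phi a) = phi' (f a)
      & f theta = theta'].

End GroupAlgebra.

Section C3.
Variables (K : fieldType) (gT : finGroupType) (g : gT).

Definition c3elt (a0 a1 a2 : K) : GA K gT :=
  [ffun x => a0 * ga_delta K 1%g x + a1 * ga_delta K g x
             + a2 * ga_delta K (g ^+ 2)%g x].

(* The six families of the classification, given a square root s of 3
   (w ranges over the cube roots of unity):
   0: phi = id, theta = sqrt3 e
   1: phi = id, theta = - sqrt3 e
   2: phi = id, theta = (1/sqrt3)(e - 2 w g - 2 w^2 g^2)
   3: phi = id, theta = -(1/sqrt3)(e - 2 w g - 2 w^2 g^2)
   4: phi(g) = w g^2 (i.e. phi(g^k) = w^k g^(2k)), theta = (1/sqrt3)(e + w g + w^2 g^2)
   5: phi(g) = w g^2, theta = -(1/sqrt3)(e + w g + w^2 g^2) *)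
Definition c3_family (s : K) (i : nat) (phi : GA K gT -> GA K gT)
    (theta : GA K gT) : Prop :=
  match i with
  | 0 => (forall a, phi a = a) /\ theta = c3elt s 0 0
  | 1 => (forall a, phi a = a) /\ theta = c3elt (- s) 0 0
  | 2 => (forall a, phi a = a) /\ exists w : K, w ^+ 3 = 1 /\
           theta = c3elt (s^-1) (- (2 * w) / s) (- (2 * w ^+ 2) / s)
  | 3 => (forall a, phi a = a) /\ exists w : K, w ^+ 3 = 1 /\
           theta = c3elt (- s^-1) (2 * w / s) (2 * w ^+ 2 / s)
  | 4 => exists w : K, w ^+ 3 = 1 /\ ga_linear phi /\
           (forall k : nat, phi (ga_delta K (g ^+ k)%g)
                            = [ffun x => w ^+ k * ga_delta K (g ^+ (2 * k))%g x]) /\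
           theta = c3elt (s^-1) (w / s) (w ^+ 2 / s)
  | 5 => exists w : K, w ^+ 3 = 1 /\ ga_linear phi /\
           (forall k : nat, phi (ga_delta K (g ^+ k)%g)
                            = [ffun x => w ^+ k * ga_delta K (g ^+ (2 * k))%g x]) /\
           theta = c3elt (- s^-1) (- w / s) (- w ^+ 2 / s)
  | _ => False
  end.

End C3.

(* Main.v *)
Require Import Defs.
From HB Require Import structures.
From mathcomp Require Import all_boot all_order all_fingroup all_algebra.
From mathcomp Require Import all_solvable.
From mathcomp Require Import ring.
Set Implicit Arguments.
Unset Strict Implicit.
Unset Printing Implicit Defensive.
Import GRing.Theory.
Local Open Scope ring_scope.

Section Alg.
Variables (K : fieldType) (HK : [pchar K] =i pred0) (s : K) (Hs : s ^+ 2 = 3).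

Lemma natK_neq0 n : (n.+1%:R : K) != 0.
Proof. by rewrite ((pcharf0P K).1 HK). Qed.
Lemma n2 : (2 : K) != 0. Proof. exact: (natK_neq0 1). Qed.
Lemma n3 : (3 : K) != 0. Proof. exact: (natK_neq0 2). Qed.
Lemma n4 : (4 : K) != 0. Proof. exact: (natK_neq0 3). Qed.
Lemma s0 : s != 0.
Proof. apply/eqP => h; move: Hs; rewrite h expr0n /= => /eqP; rewrite eq_sym (negbTE n3). done. Qed.

Ltac sc := rewrite ?n2 ?n3 ?n4 ?s0 ?andbT //=.

Lemma sq_eq (x y : K) : x ^+ 2 = y ^+ 2 -> x = y \/ x = - y.
Proof.
move=> h; have /eqP : (x - y) * (x + y) = 0.
  by transitivity (x ^+ 2 - y ^+ 2); [ring | rewrite h subrr].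
rewrite mulf_eq0 => /orP [/eqP h'|/eqP h'].
  by left; apply/eqP; rewrite -subr_eq0 h'.
by right; apply/eqP; rewrite -subr_eq0 opprK h'.
Qed.

Lemma solve_id (t0 t1 t2 : K) :
  t0 * t0 + t1 * t2 + t2 * t1 = 3 -> t0 * t1 + t1 * t0 + t2 * t2 = 0 ->
  t0 * t2 + t1 * t1 + t2 * t0 = 0 ->
  (t1 = 0 /\ t2 = 0 /\ (t0 = s \/ t0 = - s)) \/
  exists w : K, w ^+ 3 = 1 /\
   ((t0 = s^-1 /\ t1 = - (2 * w) / s /\ t2 = - (2 * w ^+ 2) / s) \/
    (t0 = - s^-1 /\ t1 = 2 * w / s /\ t2 = 2 * w ^+ 2 / s)).
Proof.
move=> E0 E1 E2.
have Hs0 := s0.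
have [t10|t1n0] := eqVneq t1 0.
  left; have t20 : t2 = 0.
    by move: E1; rewrite t10 !mulr0 mul0r !add0r => /eqP; rewrite mulf_eq0 orbb => /eqP.
  split=> //; split=> //; apply: sq_eq; rewrite Hs -E0 t10 t20; ring.
right; set r := t2 / t1.
have t2E : t2 = r * t1 by rewrite /r mulfVK.
have h3 : t2 ^+ 3 = t1 ^+ 3.
  apply/eqP; rewrite -subr_eq0; apply/eqP.
  have -> : t2 ^+ 3 - t1 ^+ 3 = t2 * (t0 * t1 + t1 * t0 + t2 * t2) - t1 * (t0 * t2 + t1 * t1 + t2 * t0) by ring.
  by rewrite E1 E2 !mulr0 subr0.
have r3 : r ^+ 3 = 1.
  by rewrite /r exprMn exprVn h3 mulfV // expf_neq0.
have t0E : t0 = - (r ^+ 2 * t1) / 2.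
  apply: (mulIf t1n0); apply: (mulIf n2).
  have h : t0 * t1 + t1 * t0 = - (t2 * t2) by apply/eqP; rewrite -subr_eq0 opprK E1.
  rewrite t2E in h.
  transitivity (t0 * t1 + t1 * t0); first ring.
  rewrite h; field; sc.
have key : (s * t1 / 2) ^+ 2 - r ^+ 2 = r ^+ 2 / 3 * ((t0 * t0 + t1 * t2 + t2 * t1) - 3).
  rewrite t0E t2E; field: r3 Hs; sc.
rewrite E0 subrr mulr0 in key.
exists r; split=> //.
have /sq_eq [h|h] : (s * t1 / 2) ^+ 2 = r ^+ 2 by apply/eqP; rewrite -subr_eq0 key.
  have t1E : t1 = 2 * r / s by rewrite -h; field; sc.
  right; split; last split=> //.
    rewrite t0E t1E; field: r3; sc.
  rewrite t2E t1E; field; sc.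
have t1E : t1 = - (2 * r) / s by rewrite -[r]opprK -h; field; sc.
left; split; last split=> //.
  rewrite t0E t1E; field: r3; sc.
rewrite t2E t1E; field; sc.
Qed.

Lemma solve_Phi (w t0 t1 t2 : K) : w ^+ 3 = 1 -> t2 = w * t1 ->
  t0 * t0 + t1 * t2 + t2 * t1 = 1 -> t0 * t1 + t1 * t0 + t2 * t2 = w ->
  (t0 = s^-1 /\ t1 = w / s /\ t2 = w ^+ 2 / s) \/
  (t0 = - s^-1 /\ t1 = - w / s /\ t2 = - w ^+ 2 / s).
Proof.
move=> w3 t2E E0 E1.
have Hs0 := s0.
have h : (t0 - w ^+ 2 * t1) ^+ 2 = 0.
  transitivity ((t0 * t0 + t1 * t2 + t2 * t1 - 1) - w ^+ 2 * (t0 * t1 + t1 * t0 + t2 * t2 - w)).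
    rewrite t2E; ring: w3.
  by rewrite E0 E1 !subrr mulr0 subr0.
have t0E : t0 = w ^+ 2 * t1.
  by apply/eqP; rewrite -subr_eq0; move/eqP: h; rewrite expf_eq0.
have t1E : t1 = w * t0 by rewrite t0E mulrA -exprS w3 mul1r.
have : (s * t0) ^+ 2 = 1 ^+ 2.
  rewrite exprMn Hs expr1n -[in RHS]E0; rewrite t2E t1E; ring: w3.
case/sq_eq => h'.
  have t0E' : t0 = s^-1 by apply: (mulfI Hs0); rewrite h' mulfV.
  left; split=> //; split; first by rewrite t1E t0E'; field; sc.
  by rewrite t2E t1E t0E'; field; sc.
have t0E' : t0 = - s^-1 by apply: (mulfI Hs0); rewrite h' mulrN mulfV.
right; split=> //; split; first by rewrite t1E t0E'; field; sc.
by rewrite t2E t1E t0E'; field; sc.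
Qed.

End Alg.

Section Helpers.
Variables (K : fieldType) (gT : finGroupType) (g : gT).
Hypothesis Hg : #[g]%g = 3%N.
Hypothesis Hgen : <[g]>%g = [set: gT].

Lemma g3 : (g ^+ 3)%g = 1%g. Proof. by rewrite -Hg expg_order. Qed.
Lemma gg : (g * g)%g = (g ^+ 2)%g. Proof. by rewrite expgS expg1. Qed.
Lemma gg2 : (g * g ^+ 2)%g = 1%g. Proof. by rewrite -expgS g3. Qed.
Lemma g2g : (g ^+ 2 * g)%g = 1%g. Proof. by rewrite -expgSr g3. Qed.
Lemma g2g2 : (g ^+ 2 * g ^+ 2)%g = g.
Proof. by rewrite -expgD (_ : (2 + 2 = 3 + 1)%N) // expgD g3 mul1g expg1. Qed.
Lemma ginv : (g^-1)%g = (g ^+ 2)%g.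
Proof. by apply/eqP; rewrite eq_invg_mul gg2. Qed.
Lemma g2inv : ((g ^+ 2)^-1)%g = g.
Proof. by apply/eqP; rewrite eq_invg_mul g2g. Qed.
Lemma g4 : (g ^+ (2 * 2))%g = g.
Proof. by rewrite (_ : (2 * 2 = 3 + 1)%N) // expgD g3 mul1g expg1. Qed.

Lemma neq_g1 : (g == 1%g) = false.
Proof. by apply/negbTE; rewrite -{1}(expg1 g) -order_dvdn Hg. Qed.
Lemma neq_1g : (1%g == g) = false.
Proof. by rewrite eq_sym neq_g1. Qed.
Lemma neq_g21 : ((g ^+ 2)%g == 1%g) = false.
Proof. by apply/negbTE; rewrite -order_dvdn Hg. Qed.
Lemma neq_1g2 : (1%g == (g ^+ 2)%g) = false.
Proof. by rewrite eq_sym neq_g21. Qed.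
Lemma neq_gg2 : (g == (g ^+ 2)%g) = false.
Proof. by rewrite -{1}(expg1 g) eq_expg_mod_order Hg. Qed.
Lemma neq_g2g : ((g ^+ 2)%g == g) = false.
Proof. by rewrite eq_sym neq_gg2. Qed.

Lemma elemP (x : gT) : [\/ x = 1%g, x = g | x = (g ^+ 2)%g].
Proof.
have : x \in <[g]>%g by rewrite Hgen inE.
case/cycleP=> i ->; rewrite -expg_mod_order Hg.
have : (i %% 3 < 3)%N by rewrite ltn_mod.
case: (i %% 3)%N => [|[|[|]]] // _; rewrite ?expg0 ?expg1;
  by [constructor 1|constructor 2|constructor 3].
Qed.

Lemma sumE (F : gT -> K) : \sum_(x : gT) F x = F 1%g + F g + F (g ^+ 2)%g.
Proof.
have -> : \sum_(x : gT) F x = \sum_(x in 1%g |: (g |: [set (g ^+ 2)%g])) F x.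
  apply: eq_bigl => x; rewrite !inE; case: (elemP x) => ->;
  by rewrite ?eqxx ?neq_g1 ?neq_1g ?neq_g21 ?neq_1g2 ?neq_gg2 ?neq_g2g ?orbT.
rewrite big_setU1 /=; last by rewrite !inE neq_1g neq_1g2.
rewrite big_setU1 /=; last by rewrite !inE neq_gg2.
by rewrite big_set1 addrA.
Qed.

Lemma sum2E (F : gT * gT -> K) : \sum_(q : gT * gT) F q =
  F (1,1)%g + F (1,g)%g + F (1, g^+2)%g +
  (F (g,1)%g + F (g,g)%g + F (g, g^+2)%g) +
  (F (g^+2,1)%g + F (g^+2,g)%g + F (g^+2, g^+2)%g).
Proof.
rewrite (eq_bigr (fun p => F (p.1, p.2))); last by case.
by rewrite -(pair_bigA _ (fun x y => F (x, y))) /= sumE !sumE.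
Qed.

Lemma ffun_eq3 (a b : GA K gT) :
  a 1%g = b 1%g -> a g = b g -> a (g ^+ 2)%g = b (g ^+ 2)%g -> a = b.
Proof. by move=> h1 h2 h3; apply/ffunP => x; case: (elemP x) => ->. Qed.

Lemma ffun_eq9 (a b : GA2 K gT) :
  (forall x y, x \in [:: 1%g; g; (g ^+ 2)%g] -> y \in [:: 1%g; g; (g ^+ 2)%g] ->
     a (x, y) = b (x, y)) -> a = b.
Proof.
move=> h; apply/ffunP => [[x y]]; apply: h;
  [case: (elemP x) => -> | case: (elemP y) => ->]; by rewrite !inE eqxx ?orbT.
Qed.


Ltac gsimp := rewrite ?ffunE /= ?(mul1g, mulg1, invg1, gg, gg2, g2g, g2g2, ginv, g2inv,
  expg1, expg0, g4, eqxx, neq_g1, neq_1g, neq_g21, neq_1g2, neq_gg2, neq_g2g) /=.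
Ltac gunf := rewrite /c3elt /ga_delta /ga_mul /ga_one /ga_comul /ga_counit /tensor_map /mul_map.

Lemma c3E (a : GA K gT) : a = c3elt g (a 1%g) (a g) (a (g ^+ 2)%g).
Proof. apply: ffun_eq3; gunf; gsimp; gsimp; ring. Qed.

Lemma mul_c3 (a0 a1 a2 b0 b1 b2 : K) :
  ga_mul (c3elt g a0 a1 a2) (c3elt g b0 b1 b2) =
  c3elt g (a0 * b0 + a1 * b2 + a2 * b1) (a0 * b1 + a1 * b0 + a2 * b2)
          (a0 * b2 + a1 * b1 + a2 * b0).
Proof. apply: ffun_eq3; gunf; rewrite !ffunE !sumE; gsimp; gsimp; ring. Qed.


Lemma c3_at1 (a0 a1 a2 : K) : c3elt g a0 a1 a2 1%g = a0.
Proof. gunf; gsimp; ring. Qed.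
Lemma c3_atg (a0 a1 a2 : K) : c3elt g a0 a1 a2 g = a1.
Proof. gunf; gsimp; ring. Qed.
Lemma c3_atg2 (a0 a1 a2 : K) : c3elt g a0 a1 a2 (g ^+ 2)%g = a2.
Proof. gunf; gsimp; ring. Qed.

Lemma c3_inj (a0 a1 a2 b0 b1 b2 : K) : c3elt g a0 a1 a2 = c3elt g b0 b1 b2 ->
  [/\ a0 = b0, a1 = b1 & a2 = b2].
Proof.
move=> h; split.
- by rewrite -(c3_at1 a0 a1 a2) h c3_at1.
- by rewrite -(c3_atg a0 a1 a2) h c3_atg.
- by rewrite -(c3_atg2 a0 a1 a2) h c3_atg2.
Qed.

Lemma one_c3 : ga_one K gT = c3elt g 1 0 0.
Proof. apply: ffun_eq3; gunf; gsimp; gsimp; ring. Qed.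

Lemma mul_delta (x y : gT) : ga_mul (ga_delta K x) (ga_delta K y) = ga_delta K (x * y)%g.
Proof.
apply/ffunP => z; rewrite !ffunE (bigD1 x) //= big1 => [|u /negbTE hu]; last first.
  by rewrite !ffunE hu mul0r.
rewrite !ffunE eqxx mul1r addr0.
have -> // : ((x^-1 * z)%g == y) = (z == (x * y)%g).
by apply/eqP/eqP => [<-|->]; rewrite ?mulKVg ?mulKg.
Qed.

Lemma mul_sdelta (c d : K) (x y : gT) :
  ga_mul [ffun z => c * ga_delta K x z] [ffun z => d * ga_delta K y z] =
  [ffun z => c * d * ga_delta K (x * y)%g z].
Proof.
apply/ffunP => z; rewrite !ffunE (bigD1 x) //= big1 => [|u /negbTE hu]; last first.
  by rewrite !ffunE hu mulr0 mul0r.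
rewrite !ffunE eqxx mulr1 addr0 mulrA.
have -> // : ((x^-1 * z)%g == y) = (z == (x * y)%g).
by apply/eqP/eqP => [<-|->]; rewrite ?mulKVg ?mulKg.
Qed.

Ltac mmsimp := rewrite /mul_map /tensor_map /ga_comul /ga_one; rewrite !ffunE !sum2E !mul_delta;
  rewrite /ga_delta /c3elt; gsimp; rewrite !sum2E; gsimp; gsimp.

Lemma mm_id : mul_map (tensor_map id id (ga_comul (ga_one K gT))) = c3elt g 3 0 0.
Proof. apply: ffun_eq3; mmsimp; ring. Qed.


Definition Phi (w : K) (a : GA K gT) : GA K gT :=
  c3elt g (a 1%g) (w ^+ 2 * a (g ^+ 2)%g) (w * a g).

Lemma mm_Phi w : w ^+ 3 = 1 ->
  mul_map (tensor_map (Phi w) id (ga_comul (ga_one K gT))) = c3elt g 1 w (w ^+ 2).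
Proof. move=> w3; apply: ffun_eq3; rewrite /Phi; mmsimp; ring: w3. Qed.

Lemma Phi_lin w : ga_linear (Phi w).
Proof. move=> c a b; apply: ffun_eq3; rewrite /Phi /c3elt /ga_delta; gsimp; gsimp; ring. Qed.

Lemma Phi_one w : Phi w (ga_one K gT) = ga_one K gT.
Proof. apply: ffun_eq3; rewrite /Phi /c3elt /ga_one /ga_delta; gsimp; gsimp; ring. Qed.

Lemma Phi_mul w : w ^+ 3 = 1 -> forall a b, Phi w (ga_mul a b) = ga_mul (Phi w a) (Phi w b).
Proof.
move=> w3 a b; rewrite [a]c3E [b]c3E mul_c3 /Phi !(c3_at1, c3_atg, c3_atg2) mul_c3.
by congr c3elt; ring: w3.
Qed.

Lemma Phi_counit w a : ga_counit (Phi w a) = ga_counit a.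
Proof. by rewrite /ga_counit /Phi c3_at1. Qed.

Lemma Phi_inv w : w ^+ 3 = 1 -> forall a, Phi w (Phi w a) = a.
Proof. move=> w3 a; apply: ffun_eq3; rewrite /Phi !(c3_at1, c3_atg, c3_atg2); ring: w3. Qed.

Ltac nine := apply: ffun_eq9 => x y; rewrite !inE => /or3P[]/eqP-> /or3P[]/eqP->.

Lemma Phi_comul w : w ^+ 3 = 1 ->
  forall a, ga_comul (Phi w a) = tensor_map (Phi w) (Phi w) (ga_comul a).
Proof.
move=> w3 a; nine; rewrite /Phi /ga_comul /tensor_map !ffunE !sum2E /c3elt /ga_delta;
  gsimp; gsimp; ring: w3.
Qed.

Lemma id_comul (a : GA K gT) : ga_comul a = tensor_map id id (ga_comul a).
Proof.
nine; rewrite /ga_comul /tensor_map !ffunE !sum2E /ga_delta; gsimp; gsimp; ring.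
Qed.

End Helpers.

Section S2.
Variables (K : fieldType) (gT : finGroupType) (g : gT).
Hypothesis Hg : #[g]%g = 3%N.
Hypothesis Hgen : <[g]>%g = [set: gT].

Lemma g22 : ((g ^+ 2) ^+ 2)%g = g.
Proof. by rewrite -expgM (g4 Hg). Qed.

Ltac gs := rewrite ?ffunE /= ?(mul1g, mulg1, invg1, gg, gg2 Hg, g2g Hg, g2g2 Hg, ginv Hg,
  g2inv Hg, expg1, expg0, g4 Hg, eqxx, neq_g1 Hg, neq_1g Hg, neq_g21 Hg, neq_1g2 Hg,
  neq_gg2 Hg, neq_g2g Hg, g22) /=.
Ltac e3 := apply: (ffun_eq3 Hg Hgen).

Notation GAK := (GA K gT).

Lemma tensor_ext (f f' h h' : GAK -> GAK) T :
  f =1 f' -> h =1 h' -> tensor_map f h T = tensor_map f' h' T.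
Proof.
by move=> E1 E2; apply/ffunP => p; rewrite !ffunE; apply: eq_bigr => q _; rewrite E1 E2.
Qed.

Lemma frob_ext (f f' : GAK -> GAK) :
  f =1 f' -> frobenius_morphism f -> frobenius_morphism f'.
Proof.
move=> E [h1 h2 h3 h4 h5]; split.
- by move=> c a b; rewrite -!E h1.
- by rewrite -E.
- by move=> a b; rewrite -!E h3.
- by move=> a; rewrite -E h4; apply: tensor_ext.
- by move=> a; rewrite -E h5.
Qed.

Lemma id_frob : @frobenius_morphism K gT id.
Proof. by split=> // a; rewrite -(id_comul Hg Hgen). Qed.

Lemma Phi_frob (w : K) : w ^+ 3 = 1 -> frobenius_morphism (Phi g w).
Proof.
move=> w3; split.
- exact: Phi_lin.
- exact: Phi_one.
- exact: Phi_mul.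
- exact: Phi_comul.
- exact: Phi_counit.
Qed.

Lemma lin_c3 (f : GAK -> GAK) : ga_linear f -> forall a, f a =
  [ffun x => a 1%g * f (ga_delta K 1%g) x + a g * f (ga_delta K g) x
             + a (g ^+ 2)%g * f (ga_delta K (g ^+ 2)%g) x].
Proof.
move=> Hl a.
pose z : GAK := [ffun=> 0].
have fz : f z = z.
  have e : z = [ffun x => -1 * z x + z x] by apply/ffunP => x; rewrite !ffunE; ring.
  by rewrite {1}e Hl; apply/ffunP => x; rewrite !ffunE; ring.
have ea : a = [ffun x => a 1%g * ga_delta K 1%g x +
   [ffun y => a g * ga_delta K g y + [ffun t => a (g ^+ 2)%g * ga_delta K (g ^+ 2)%g t + z t] y] x].
  e3; rewrite /ga_delta; gs; gs; ring.
rewrite {1}ea Hl Hl Hl fz; apply/ffunP => x; rewrite !ffunE; ring.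
Qed.

Lemma pow_delta (f : GAK -> GAK) (w : K) :
  f (ga_one K gT) = ga_one K gT ->
  (forall a b, f (ga_mul a b) = ga_mul (f a) (f b)) ->
  f (ga_delta K g) = [ffun x => w * ga_delta K (g ^+ 2)%g x] ->
  forall k, f (ga_delta K (g ^+ k)%g) = [ffun x => w ^+ k * ga_delta K (g ^+ (2 * k))%g x].
Proof.
move=> H1 Hm Hd; elim=> [|k IH].
  rewrite expg0 -[ga_delta K 1%g]/(ga_one K gT) H1.
  by apply/ffunP => x; rewrite !ffunE mul1r.
rewrite expgSr -mul_delta Hm IH Hd mul_sdelta -exprSr -expgD.
by rewrite mulnS addnC.
Qed.

Lemma Phi_dg (w : K) : Phi g w (ga_delta K g) = [ffun x => w * ga_delta K (g ^+ 2)%g x].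
Proof. e3; rewrite /Phi /c3elt /ga_delta; gs; gs; ring. Qed.

Lemma lin_Phi (f : GAK -> GAK) (w : K) : ga_linear f ->
  (forall k, f (ga_delta K (g ^+ k)%g) = [ffun x => w ^+ k * ga_delta K (g ^+ (2 * k))%g x]) ->
  forall a, f a = Phi g w a.
Proof.
move=> Hl Hk a.
have h0 := Hk 0%N; have h1 := Hk 1%N; have h2 := Hk 2%N.
rewrite muln0 expg0 in h0; rewrite muln1 expg1 in h1; rewrite (g4 Hg) in h2.
rewrite (lin_c3 Hl) h0 h1 h2; e3; rewrite /Phi /c3elt /ga_delta; gs; gs; ring.
Qed.

Lemma mulr1' (a : GAK) : ga_mul a (ga_one K gT) = a.
Proof.
e3; rewrite /ga_mul /ga_one /ga_delta !ffunE !(sumE Hg Hgen); gs; gs; ring.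
Qed.

Lemma phi_class (phi : GAK -> GAK) : (2 : K) != 0 ->
  frobenius_morphism phi -> (forall a, phi (phi a) = a) ->
  (forall a, phi a = a) \/ exists w : K, w ^+ 3 = 1 /\ forall a, phi a = Phi g w a.
Proof.
move=> n2 [Hl H1 Hm Hc He] Hinv.
have e1 : phi (ga_delta K g) 1%g = 0.
  by have := He (ga_delta K g); rewrite /ga_counit => ->; rewrite /ga_delta; gs.
have e2 : phi (ga_delta K (g ^+ 2)%g) = ga_mul (phi (ga_delta K g)) (phi (ga_delta K g)).
  by rewrite -Hm mul_delta gg.
have e3' : phi (ga_delta K (g ^+ 2)%g) 1%g = 0.
  by have := He (ga_delta K (g ^+ 2)%g); rewrite /ga_counit => ->; rewrite /ga_delta; gs.
have e4 : ga_mul (phi (ga_delta K g)) (phi (ga_delta K (g ^+ 2)%g)) = ga_one K gT.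
  by rewrite -Hm mul_delta (gg2 Hg) -[ga_delta K 1%g]/(ga_one K gT) H1.
have e5 := Hinv (ga_delta K g).
set a := phi (ga_delta K g) g; set b := phi (ga_delta K g) (g ^+ 2)%g.
have uE : phi (ga_delta K g) = c3elt g 0 a b by rewrite {1}(c3E Hg Hgen (phi _)) e1.
rewrite e2 uE (mul_c3 Hg Hgen) in e3' e4.
rewrite (c3_at1 Hg) in e3'.
rewrite (mul_c3 Hg Hgen) (one_c3 K Hg Hgen) in e4.
case/(c3_inj Hg): e4 => e4 _ _.
rewrite {1}uE (lin_c3 Hl) e2 uE (mul_c3 Hg Hgen) in e5.
have e6 := congr1 (fun t : GAK => t g) e5.
move: e6; rewrite /= ffunE (c3_atg Hg) (c3_atg Hg) /ga_delta; gs => e6.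
have ab0 : a * b = 0.
  apply/eqP; rewrite -(mulrI_eq0 _ (lregP n2)); apply/eqP; rewrite -e3'; ring.
have /orP[/eqP a0|/eqP b0] : (a == 0) || (b == 0) by rewrite -mulf_eq0 ab0.
  right; exists b; split.
    by rewrite -e4 a0; ring.
  apply: lin_Phi => //; apply: pow_delta => //.
  by rewrite uE a0; e3; rewrite /c3elt /ga_delta; gs; gs; ring.
left.
have a3 : a ^+ 3 = 1 by rewrite -e4 b0; ring.
have a2 : a ^+ 2 = 1 by move: e6; rewrite b0 => e6; apply: (etrans _ e6); ring.
have a1 : a = 1 by rewrite -a3 exprS a2 mulr1.
have dg : phi (ga_delta K g) = ga_delta K g.
  by rewrite uE a1 b0; e3; rewrite /c3elt /ga_delta; gs; gs; ring.
move=> x; rewrite (lin_c3 Hl) e2 dg mul_delta gg -[ga_delta K 1%g]/(ga_one K gT) H1.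
e3; rewrite /ga_one /ga_delta; gs; gs; ring.
Qed.

End S2.

Section S3.
Variables (K : fieldType) (HK : [pchar K] =i pred0) (gT : finGroupType) (g : gT).
Hypothesis Hg : #[g]%g = 3%N.
Hypothesis Hgen : <[g]>%g = [set: gT].
Variables (s : K) (Hs : s ^+ 2 = 3).

Notation GAK := (GA K gT).

Ltac gs := rewrite ?ffunE /= ?(mul1g, mulg1, invg1, gg, gg2 Hg, g2g Hg, g2g2 Hg, ginv Hg,
  g2inv Hg, expg1, expg0, g4 Hg, eqxx, neq_g1 Hg, neq_1g Hg, neq_g21 Hg, neq_1g2 Hg,
  neq_gg2 Hg, neq_g2g Hg) /=.
Ltac sc3 := rewrite ?(n2 HK) ?(n3 HK) ?(n4 HK) ?(s0 HK Hs) ?andbT //=.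

Lemma Phi_delta (w : K) : w ^+ 3 = 1 -> forall k,
  Phi g w (ga_delta K (g ^+ k)%g) = [ffun x => w ^+ k * ga_delta K (g ^+ (2 * k))%g x].
Proof.
move=> w3; apply: pow_delta.
- exact: (Phi_one Hg Hgen).
- exact: (Phi_mul Hg Hgen w3).
- exact: (Phi_dg Hg Hgen).
Qed.

Lemma fwd (phi : GAK -> GAK) (theta : GAK) : extended_structure phi theta ->
  exists i : nat, (i < 6)%N /\ c3_family g s i phi theta.
Proof.
move=> [Hf Hinv Hfix H3].
have Hl : ga_linear phi by case: Hf.
have thE := c3E Hg Hgen theta.
move: thE Hfix H3; move: (theta 1%g) (theta g) (theta (g ^+ 2)%g) => t0 t1 t2 thE.
subst theta => Hfix H3.
case: (phi_class Hg Hgen (n2 HK) Hf Hinv) => [Hid | [w [w3 HP]]].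
  rewrite (tensor_ext _ Hid (frefl id)) (mm_id K Hg Hgen) (mul_c3 Hg Hgen) in H3.
  case/(c3_inj Hg): H3 => E0 E1 E2.
  case: (solve_id HK Hs (esym E0) (esym E1) (esym E2)) =>
     [[-> [-> [->|->]]] | [w [w3 [[-> [-> ->]]|[-> [-> ->]]]]]].
  - by exists 0%N.
  - by exists 1%N.
  - by exists 2%N; split=> //; split=> //; exists w.
  - by exists 3%N; split=> //; split=> //; exists w.
rewrite (tensor_ext _ HP (frefl id)) (mm_Phi Hg Hgen w3) (mul_c3 Hg Hgen) in H3.
case/(c3_inj Hg): H3 => E0 E1 E2.
have h := Hfix (ga_one K gT); rewrite (mulr1' Hg Hgen) HP in h.
have t2E : t2 = w * t1.
  have := congr1 (fun t : GAK => t (g ^+ 2)%g) h.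
  by rewrite /Phi /= !(c3_atg2 Hg) (c3_atg Hg).
have Hk := Phi_delta w3.
case: (solve_Phi HK Hs w3 t2E (esym E0) (esym E1)) => [[-> [-> ->]]|[-> [-> ->]]].
  exists 4%N; split=> //; exists w; split=> //; split=> //; split=> // k.
  by rewrite HP Hk.
exists 5%N; split=> //; exists w; split=> //; split=> //; split=> // k.
by rewrite HP Hk.
Qed.


Lemma bwd (phi : GAK -> GAK) (theta : GAK) (i : nat) :
  c3_family g s i phi theta -> extended_structure phi theta.
Proof.
have Hs0 := s0 HK Hs.
have idcase : (forall a, phi a = a) -> ga_mul theta theta = c3elt g 3 0 0 ->
    extended_structure phi theta.
  move=> Hid Hth; split.
  - apply: (@frob_ext K gT id phi); [by move=> a; rewrite Hid | exact: (id_frob K Hg Hgen)].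
  - by move=> a; rewrite !Hid.
  - by move=> a; rewrite Hid.
  - by rewrite (tensor_ext _ Hid (frefl id)) (mm_id K Hg Hgen) Hth.
have Pcase : forall w (e : K), w ^+ 3 = 1 -> e ^+ 2 = 1 -> ga_linear phi ->
    (forall k : nat, phi (ga_delta K (g ^+ k)%g)
                     = [ffun x => w ^+ k * ga_delta K (g ^+ (2 * k))%g x]) ->
    theta = c3elt g (e / s) (e * w / s) (e * w ^+ 2 / s) ->
    extended_structure phi theta.
  move=> w e w3 e2 Hl Hk ->.
  have HP := lin_Phi Hg Hgen Hl Hk.
  split.
  - exact: (@frob_ext K gT (Phi g w) phi (fun a => esym (HP a)) (Phi_frob Hg Hgen w3)).
  - by move=> a; rewrite !HP (Phi_inv Hg Hgen w3).
  - move=> a; rewrite HP [a](c3E Hg Hgen) (mul_c3 Hg Hgen) /Phi.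
    by rewrite !(c3_at1 Hg, c3_atg Hg, c3_atg2 Hg); congr c3elt; field: w3; sc3.
  - rewrite (tensor_ext _ HP (frefl id)) (mm_Phi Hg Hgen w3) (mul_c3 Hg Hgen).
    by congr c3elt; field: w3 e2 Hs; sc3.
case: i => [|[|[|[|[|[|i]]]]]] //=.
- move=> [Hid th]; apply: idcase => //; rewrite th (mul_c3 Hg Hgen).
  by congr c3elt; ring: Hs.
- move=> [Hid th]; apply: idcase => //; rewrite th (mul_c3 Hg Hgen).
  by congr c3elt; ring: Hs.
- move=> [Hid [w [w3 th]]]; apply: idcase => //; rewrite th (mul_c3 Hg Hgen).
  by congr c3elt; field: w3 Hs; sc3.
- move=> [Hid [w [w3 th]]]; apply: idcase => //; rewrite th (mul_c3 Hg Hgen).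
  by congr c3elt; field: w3 Hs; sc3.
- move=> [w [w3 [Hl [Hk th]]]]; apply: (Pcase w 1) => //; first by rewrite expr1n.
  by rewrite th; congr c3elt; rewrite ?mul1r.
- move=> [w [w3 [Hl [Hk th]]]]; apply: (Pcase w (-1)) => //; first by rewrite sqrrN expr1n.
  by rewrite th; congr c3elt; rewrite ?mulN1r.
Qed.


Definition cval (i : nat) : K :=
  match i with 0 => s | 1 => - s | 2 => s^-1 | 3 => - s^-1 | 4 => s^-1 | _ => - s^-1 end.

Lemma fam_info (phi : GAK -> GAK) (theta : GAK) (i : nat) :
  c3_family g s i phi theta ->
  [/\ (i < 6)%N, theta 1%g = cval i, ((i < 4)%N -> forall a, phi a = a)
    & ((4 <= i)%N -> phi (ga_delta K g) != ga_delta K g)].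
Proof.
have nd : forall w : K, [ffun x => w ^+ 1 * ga_delta K (g ^+ (2 * 1))%g x] != ga_delta K g.
  move=> w; apply/eqP => /(congr1 (fun t : GAK => t g)); rewrite /ga_delta; gs.
  by move/eqP; rewrite mulr0 eq_sym oner_eq0.
case: i => [|[|[|[|[|[|i]]]]]] //=.
- by move=> [Hid ->]; split=> //; rewrite (c3_at1 Hg).
- by move=> [Hid ->]; split=> //; rewrite (c3_at1 Hg).
- by move=> [Hid [w [_ ->]]]; split=> //; rewrite (c3_at1 Hg).
- by move=> [Hid [w [_ ->]]]; split=> //; rewrite (c3_at1 Hg).
- move=> [w [_ [_ [Hk ->]]]]; split=> //; first by rewrite (c3_at1 Hg).
  by move=> _; have := Hk 1%N; rewrite {1}expg1 => ->.
- move=> [w [_ [_ [Hk ->]]]]; split=> //; first by rewrite (c3_at1 Hg).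
  by move=> _; have := Hk 1%N; rewrite {1}expg1 => ->.
Qed.

Lemma cval_inj (i j : nat) : (i < 6)%N -> (j < 6)%N -> (i < 4)%N = (j < 4)%N ->
  cval i = cval j -> i = j.
Proof.
have Hs0 := s0 HK Hs.
have N2 := n2 HK.
have N4 := n4 HK.
have ne1 : s = - s -> False.
  move=> h; have e : (2 : K) = (s - - s) / s by field; sc3.
  by move: e; rewrite -h subrr mul0r; apply/eqP.
have ne2 : s = s^-1 -> False.
  move=> h; have e : (2 : K) = s * s - 1 by rewrite -expr2 Hs; ring.
  by move: e; rewrite {2}h mulfV // subrr; apply/eqP.
have ne3 : s = - s^-1 -> False.
  move=> h; have e : (4 : K) = s * s + 1 by rewrite -expr2 Hs; ring.
  by move: e; rewrite {2}h mulrN mulfV // addNr; apply/eqP.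
have ne4 : - s = s^-1 -> False by move=> h; apply: ne3; rewrite -h opprK.
have ne5 : - s = - s^-1 -> False by move/oppr_inj.
have ne6 : s^-1 = - s^-1 -> False.
  move=> h; have e : (2 : K) = (s^-1 - - s^-1) * s by field; sc3.
  by move: e; rewrite -h subrr mul0r; apply/eqP.
move: i j => [|[|[|[|[|[|i]]]]]] [|[|[|[|[|[|j]]]]]] //= _ _ hP hv;
  try discriminate hP;
  first [ by case: ne1 | by case: ne1; rewrite hv
        | by case: ne2 | by case: ne2; rewrite hv
        | by case: ne3 | by case: ne3; rewrite hv
        | by case: ne4 | by case: ne4; rewrite hv
        | by case: ne5 | by case: ne5; rewrite hv
        | by case: ne6 | by case: ne6; rewrite hv
        | idtac ].
Qed.

Lemma noniso (i j : nat) (phi phi' : GAK -> GAK) (th th' : GAK) :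
  c3_family g s i phi th -> c3_family g s j phi' th' ->
  ext_isomorphic phi th phi' th' -> i = j.
Proof.
move=> Fi Fj [f [Hf [finv fK fKV] Hc Ht]].
case: (fam_info Fi) => i6 vi idi ndi.
case: (fam_info Fj) => j6 vj idj ndj.
apply: cval_inj => //.
- case: (ltnP i 4) => hi; case: (ltnP j 4) => hj //.
    exfalso; move/negP: (ndj hj); apply; apply/eqP.
    by have := Hc (finv (ga_delta K g)); rewrite idi // fKV => <-.
  exfalso; move/negP: (ndi hi); apply; apply/eqP.
  by apply: (can_inj fK); rewrite Hc idj.
- rewrite -vi -vj -Ht; case: Hf => _ _ _ _ He.
  by have := He th; rewrite /ga_counit => ->.
Qed.

End S3.

Theorem mainTheorem6 (K : closedFieldType) (HK : [pchar K] =i pred0)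
    (gT : finGroupType) (g : gT) (Hg : #[g]%g = 3%N)
    (Hgen : <[g]>%g = [set: gT]) (s : K) (Hs : s ^+ 2 = 3) :
  (forall (phi : GA K gT -> GA K gT) (theta : GA K gT),
      extended_structure phi theta <->
      exists i : nat, (i < 6)%N /\ c3_family g s i phi theta)
  /\
  (forall (i j : nat) (phi phi' : GA K gT -> GA K gT) (theta theta' : GA K gT),
      c3_family g s i phi theta -> c3_family g s j phi' theta' ->
      ext_isomorphic phi theta phi' theta' -> i = j).
Proof.
split.
  move=> phi theta; split; first exact: (fwd HK Hg Hgen Hs).
  by case=> i [_ F]; exact: (bwd HK Hg Hgen Hs F).
move=> i j phi phi' th th'; exact: (noniso HK Hg Hs).
Qed.
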